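(* Let $X$ be a nonempty set and $d$ a triangular symmetric on $X$ such that $(X,d)$ is 0-complete. Let $T:X\to X$, $G\in\{M_1,M_2\}$, and suppose $d(Tx,Ty)\le\varphi(G(x,y))$ for all $x,y\in X$, for some asymptotic normal function $\varphi:[0,\infty)\to[0,\infty)$. Then $T$ is $d$-asymptotic, i.e. $\lim_n d(T^nx,T^{n+1}x)=0$ for every $x\in X$.
   Context: A symmetric on $X$ is a map $d:X\times X\to[0,\infty)$ with $d(x,y)=d(y,x)$; it is triangular if $d(x,z)\le d(x,y)+d(y,z)$ for all $x,y,z$. A sequence $(x_n)$ $0d$-converges to $x$ if $d(x_n,x)\to0$; it is $0d$-Cauchy if for every $\varepsilon>0$ there is $j$ with $d(x_m,x_n)<\varepsilon$ whenever $j\le m<n$; $(X,d)$ is 0-complete if every $0d$-Cauchy sequence $0d$-converges to some point. Notation: $M_1(x,y)=d(x,y)$, $H(x,y)=\max\{d(x,Tx),d(y,Ty)\}$, $M_2=\max\{M_1,H\}$. $\varphi$ is normal if $\varphi(0)=0$ and $\varphi(t)<t$ for $t>0$; asymptotic normal if normal and every sequence $(r_n)$ in $[0,\infty)$ with $r_{n+1}\le\varphi(r_n)$ for all $n$ tends to $0$. *)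

(* Defs.v *)
From Stdlib Require Import Reals.
Open Scope R_scope.

Definition symmetric_on {X : Type} (d : X -> X -> R) : Prop :=
  (forall x y, 0 <= d x y) /\ (forall x y, d x y = d y x).

Definition triangular {X : Type} (d : X -> X -> R) : Prop :=
  forall x y z, d x z <= d x y + d y z.

Definition zero_d_converges {X : Type} (d : X -> X -> R) (u : nat -> X) (x : X) : Prop :=
  Un_cv (fun n => d (u n) x) 0.

Definition zero_d_Cauchy {X : Type} (d : X -> X -> R) (u : nat -> X) : Prop :=
  forall eps, eps > 0 -> exists j : nat, forall m n : nat, (j <= m)%nat -> (m < n)%nat ->
    d (u m) (u n) < eps.

Definition zero_complete {X : Type} (d : X -> X -> R) : Prop :=
  forall u : nat -> X, zero_d_Cauchy d u -> exists x, zero_d_converges d u x.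

Definition M1 {X : Type} (d : X -> X -> R) (x y : X) : R := d x y.
Definition Hd {X : Type} (d : X -> X -> R) (T : X -> X) (x y : X) : R :=
  Rmax (d x (T x)) (d y (T y)).
Definition M2 {X : Type} (d : X -> X -> R) (T : X -> X) (x y : X) : R :=
  Rmax (M1 d x y) (Hd d T x y).

(* phi : [0,oo) -> [0,oo), modelled as R -> R with values in [0,oo) on [0,oo) *)
Definition maps_nonneg (phi : R -> R) : Prop := forall t, 0 <= t -> 0 <= phi t.

Definition normal (phi : R -> R) : Prop :=
  phi 0 = 0 /\ forall t, t > 0 -> phi t < t.

Definition asymptotic_normal (phi : R -> R) : Prop :=
  normal phi /\
  forall r : nat -> R, (forall n, 0 <= r n) -> (forall n, r (S n) <= phi (r n)) ->
    Un_cv r 0.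

Definition d_asymptotic {X : Type} (d : X -> X -> R) (T : X -> X) : Prop :=
  forall x, Un_cv (fun n => d (Nat.iter n T x) (Nat.iter (S n) T x)) 0.

(* Main.v *)
Require Import Defs.
From Stdlib Require Import Reals Lra.
Open Scope R_scope.

Theorem lemma5 (X : Type) (x0 : X) (d : X -> X -> R) (T : X -> X)
  (G : X -> X -> R) (phi : R -> R) :
  symmetric_on d -> triangular d -> zero_complete d ->
  (G = M1 d \/ G = M2 d T) ->
  maps_nonneg phi -> asymptotic_normal phi ->
  (forall x y, d (T x) (T y) <= phi (G x y)) ->
  d_asymptotic d T.
Proof.
  intros [Hnn Hsym] _ _ HG _ [[H0 Hlt] Has] Hc x.
  apply Has.
  - intros n; apply Hnn.
  - intros n.
    set (a := Nat.iter n T x).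
    change (d (T a) (T (T a)) <= phi (d a (T a))).
    specialize (Hc a (T a)).
    destruct HG as [-> | ->].
    + exact Hc.
    + unfold M2, M1, Hd in Hc.
      assert (Ha := Hnn a (T a)).
      destruct (Rle_dec (d (T a) (T (T a))) (d a (T a))) as [Hle|Hle].
      * replace (Rmax (d a (T a)) (Rmax (d a (T a)) (d (T a) (T (T a)))))
          with (d a (T a)) in Hc; [exact Hc|].
        rewrite (Rmax_left (d a (T a)) (d (T a) (T (T a)))) by lra.
        rewrite Rmax_left; lra.
      * exfalso.
        replace (Rmax (d a (T a)) (Rmax (d a (T a)) (d (T a) (T (T a)))))
          with (d (T a) (T (T a))) in Hc.
        -- assert (Hp : d (T a) (T (T a)) > 0) by lra.
           specialize (Hlt _ Hp). lra.
        -- rewrite (Rmax_right (d a (T a)) (d (T a) (T (T a)))) by lra.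
           rewrite Rmax_right; lra.
Qed.
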